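(* Let $\mathcal A=\{a_1,\dots,a_n\}\subset\mathbb Z^d$ with $n\ge d+2$ and $d$-dimensional convex hull. Let $\Delta_1,\dots,\Delta_p$ ($p\ge1$) be $d$-simplices of $\mathcal A$ which all occur in some (common) regular subdivision of $\mathcal A$, and let $I_k$ be the index set of the vertices of $\Delta_k$, $k=1,\dots,p$. Then the cone $\mathcal C_{\Delta_1,\dots,\Delta_p}$ of all height vectors $h\in\mathbb R^n$ inducing a regular subdivision of $\mathcal A$ containing $\Delta_1,\dots,\Delta_p$ is a nonempty open polyhedral cone defined by the linear inequalities \[ \langle d_{I_k}\cdot m^{I_k}_i,h\rangle>0\quad\text{for all }k=1,\dots,p\text{ and all } i\notin I_k, \] and the vectors $\{d_{I_k}\cdot m^{I_k}_i:\ k=1,\dots,p,\ i\notin I_k\}$ generate the kernel of $A$.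
   Context: Let $A\in\mathbb Z^{(d+1)\times n}$ be the matrix whose $j$-th column is $(1,a_j)^t$, and for $h\in\mathbb R^n$ let $A_h$ be $A$ with the extra last row $h$. A $d$-simplex of $\mathcal A$ is a subset of $d+1$ affinely independent points. For an index set $I=\{i_1<\dots<i_{d+1}\}$ of a $d$-simplex, $d_I$ is the determinant of the columns of $A$ indexed by $I$; for $i\notin I$, $d_{I\cup\{i\}}(h)$ is the determinant of the columns of $A_h$ indexed by $I\cup\{i\}$ times the sign of the permutation sending the increasingly ordered $I\cup\{i\}$ to $(i_1,\dots,i_{d+1},i)$, and $m^I_i\in\mathbb R^n$ is the vector with $d_{I\cup\{i\}}(h)=\langle m^I_i,h\rangle$ for all $h$. Regular subdivisions: for $h\in\mathbb R^n$, lift $a_j$ to $(a_j,h_j)$; lower faces of the convex hull of the lifted points are faces with an inner normal having positive last coordinate; each lower face $F$ gives the cell $\{a_j:(a_j,h_j)\in F\}$, and the collection of cells is the regular subdivision induced by $h$. A simplex occurs in / is contained in a subdivision if it is one of its cells. *)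

(* Defs.v *)
From HB Require Import structures.
From mathcomp Require Import all_boot all_order all_algebra.
From mathcomp Require Import reals.
Set Implicit Arguments. Unset Strict Implicit. Unset Printing Implicit Defensive.
Import Order.TTheory GRing.Theory Num.Theory.
Local Open Scope ring_scope.

Section Defs.
Variables (R : realType) (d n : nat).

Definition dotv (k : nat) (u v : 'rV[R]_k) : R := \sum_(i < k) u 0 i * v 0 i.

Definition ptR (a : 'I_n -> 'rV[int]_d) (j : 'I_n) : 'rV[R]_d :=
  map_mx (fun z : int => z%:~R) (a j).

Definition Amx (a : 'I_n -> 'rV[int]_d) : 'M[R]_(1 + d, n) :=
  col_mx (const_mx 1) (\matrix_(r < d, j < n) ptR a j 0 r).

Definition Ahmx (a : 'I_n -> 'rV[int]_d) (h : 'rV[R]_n) : 'M[R]_(1 + d + 1, n) :=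
  col_mx (Amx a) h.

(* The square matrix whose k-th column is the column of M indexed by the
   k-th entry of the sequence s (zero column if s is too short). *)
Definition colsq (m : nat) (M : 'M[R]_(m, n)) (s : seq 'I_n) : 'M[R]_m :=
  \matrix_(r < m, k < m) oapp (fun j => M r j) 0 (nth None (map Some s) k).

Definition aff_indep (a : 'I_n -> 'rV[int]_d) (I : {set 'I_n}) : Prop :=
  forall lam : 'I_n -> R, (forall j, j \notin I -> lam j = 0) ->
    \sum_j lam j = 0 -> \sum_j lam j *: ptR a j = 0 -> forall j, lam j = 0.

Definition is_dsimplex (a : 'I_n -> 'rV[int]_d) (I : {set 'I_n}) : Prop :=
  #|I| = d.+1 /\ aff_indep a I.

(* d_I : determinant of the columns of A indexed by I (enum I lists I in
   increasing order). *)
Definition dI (a : 'I_n -> 'rV[int]_d) (I : {set 'I_n}) : R :=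
  \det (colsq (Amx a) (enum I)).

(* d_{I u {i}}(h) : determinant of the columns of A_h in the order
   (i_1, ..., i_{d+1}, i), i.e. the determinant of the increasingly ordered
   columns times the sign of the reordering permutation. *)
Definition dIi (a : 'I_n -> 'rV[int]_d) (I : {set 'I_n}) (i : 'I_n)
  (h : 'rV[R]_n) : R :=
  \det (colsq (Ahmx a h) (rcons (enum I) i)).

Definition liftpt (a : 'I_n -> 'rV[int]_d) (h : 'rV[R]_n) (j : 'I_n)
  : 'rV[R]_(d + 1) := row_mx (ptR a j) (h 0 j)%:M.

Definition in_conv (a : 'I_n -> 'rV[int]_d) (h : 'rV[R]_n) (x : 'rV[R]_(d + 1))
  : Prop :=
  exists lam : 'I_n -> R, (forall j, 0 <= lam j) /\ \sum_j lam j = 1 /\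
    x = \sum_j lam j *: liftpt a h j.

Definition on_face (a : 'I_n -> 'rV[int]_d) (h : 'rV[R]_n) (w : 'rV[R]_(d + 1))
  (x : 'rV[R]_(d + 1)) : Prop :=
  in_conv a h x /\ forall y, in_conv a h y -> dotv w x <= dotv w y.

(* C is a cell of the regular subdivision induced by h : C is the set of
   indices of lifted points lying on some lower face, i.e. a face with an
   inner normal w having positive last coordinate. *)
Definition is_cell (a : 'I_n -> 'rV[int]_d) (h : 'rV[R]_n) (C : {set 'I_n})
  : Prop :=
  exists w : 'rV[R]_(d + 1), 0 < w 0 (rshift d (0 : 'I_1)) /\
    forall j, (j \in C) <-> on_face a h w (liftpt a h j).

(* the convex hull of A is d-dimensional: its affine hull is R^d *)
Definition full_dim (a : 'I_n -> 'rV[int]_d) : Prop :=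
  forall x : 'rV[R]_d, exists lam : 'I_n -> R,
    \sum_j lam j = 1 /\ x = \sum_j lam j *: ptR a j.

End Defs.

Arguments is_cell R {d n} a h C.
Arguments dIi R {d n} a I i h.
Arguments on_face R {d n} a h w x.
Arguments in_conv R {d n} a h x.
Arguments liftpt R {d n} a h j.

(* Main.v *)
Require Import Defs.
From HB Require Import structures.
From mathcomp Require Import all_boot all_order all_algebra.
From mathcomp Require Import reals.
From mathcomp Require Import ring lra.
Set Implicit Arguments. Unset Strict Implicit. Unset Printing Implicit Defensive.
Import Order.TTheory GRing.Theory Num.Theory.
Local Open Scope ring_scope.
Section Aux.
Variable R : realType.

Lemma det_schur (k : nat) (B : 'M[R]_k) (x : 'cV_k) (y : 'rV_k) (c : 'M_1) :
  B \in unitmx ->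
  \det (block_mx B x y c) = \det B * \det (c - y *m invmx B *m x).
Proof.
move=> uB.
have -> : block_mx B x y c =
  block_mx 1%:M 0 (y *m invmx B) 1%:M *m block_mx B x 0 (c - y *m invmx B *m x).
  rewrite mulmx_block !mul1mx !mul0mx !addr0 ?mulmx0 ?addr0 mulmxKV //.
  by rewrite -mulmxA addrC subrK.
by rewrite det_mulmx det_lblock det_ublock !det1 !mul1r.
Qed.

Lemma dotv_sum (k : nat) (I0 : finType) (w : 'rV[R]_k) (l : I0 -> R) (x : I0 -> 'rV[R]_k) :
  dotv w (\sum_j l j *: x j) = \sum_j l j * dotv w (x j).
Proof.
rewrite /dotv.
under eq_bigr => i _ do rewrite summxE mulr_sumr.
rewrite exchange_big /=; apply: eq_bigr => j _.
rewrite mulr_sumr; apply: eq_bigr => i _; rewrite mxE; ring.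
Qed.

Lemma dotv_row_mx (k1 k2 : nat) (u : 'rV[R]_k1) (v : 'rV[R]_k2) u' v' :
  dotv (row_mx u v) (row_mx u' v') = dotv u u' + dotv v v'.
Proof.
by rewrite /dotv big_split_ord /=; congr (_ + _); apply: eq_bigr => i _;
  rewrite !(row_mxEl, row_mxEr).
Qed.

Lemma dotvZ (k : nat) (c : R) (u v : 'rV[R]_k) : dotv (c *: u) v = c * dotv u v.
Proof. by rewrite /dotv mulr_sumr; apply: eq_bigr => i _; rewrite mxE mulrA. Qed.

End Aux.

Section Simp.
Variables (R : realType) (d n : nat) (a : 'I_n -> 'rV[int]_d) (I : {set 'I_n}) (j0 : 'I_n).
Hypothesis cardI : #|I| = d.+1.

Definition sel (k : 'I_(1 + d)) : 'I_n := nth j0 (enum I) k.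
Definition Bm : 'M[R]_(1 + d) := \matrix_(r, k) Amx R a r (sel k).
Definition hI (h : 'rV[R]_n) : 'rV[R]_(1 + d) := \row_k h 0 (sel k).
Let A := Amx R a.

Lemma size_enumI : size (enum I) = (1 + d)%N.
Proof. by rewrite -cardE cardI. Qed.

Lemma sel_in k : sel k \in I.
Proof. by rewrite -mem_enum /sel mem_nth // size_enumI. Qed.

Lemma sel_inj : injective sel.
Proof.
move=> k1 k2 /eqP; rewrite /sel nth_uniq ?enum_uniq ?size_enumI //.
by move/eqP/val_inj.
Qed.

Lemma sel_onto j : j \in I -> exists k, sel k = j.
Proof.
move=> jI; have lt : (index j (enum I) < 1 + d)%N by rewrite -size_enumI index_mem mem_enum.
by exists (Ordinal lt); rewrite /sel /= nth_index // mem_enum.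
Qed.

Lemma colsqB : colsq A (enum I) = Bm.
Proof.
apply/matrixP => r k.
rewrite mxE.
rewrite [RHS]mxE.
by rewrite (nth_map j0) ?size_enumI //.
Qed.

Lemma colsqAh (h : 'rV[R]_n) (i : 'I_n) :
  colsq (Ahmx a h) (rcons (enum I) i) = block_mx Bm (col i A) (hI h) (h 0 i)%:M.
Proof.
apply/matrixP => r c; rewrite mxE map_rcons nth_rcons size_map size_enumI.
rewrite -(splitK c) -(splitK r).
case: (split c) => c'; case: (split r) => r' /=.
- rewrite ltn_ord (nth_map j0) ?size_enumI //= block_mxEul /Ahmx col_mxEu.
  rewrite /Bm mxE. reflexivity.
- rewrite ltn_ord (nth_map j0) ?size_enumI //= block_mxEdl /Ahmx col_mxEd.
  by rewrite /hI mxE (ord1 r').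
- rewrite ord1 addn0 ltnn eqxx /= block_mxEur /Ahmx col_mxEu.
  by rewrite [RHS]mxE.
- rewrite ?ord1 ?addn0 ltnn eqxx /= block_mxEdr /Ahmx col_mxEd.
  by rewrite [RHS]mxE eqxx mulr1n.
Qed.


Lemma AmxEu j : Amx R a (lshift d (0 : 'I_1)) j = 1.
Proof. by rewrite /Amx col_mxEu mxE. Qed.

Lemma AmxEd r j : Amx R a (rshift 1 r) j = ptR R a j 0 r.
Proof. by rewrite /Amx col_mxEd mxE. Qed.

Lemma sel_sum (v : 'rV[R]_(1 + d)) (F : 'I_n -> R) :
  \sum_j (\sum_k (sel k == j)%:R * v 0 k) * F j = \sum_k v 0 k * F (sel k).
Proof.
under eq_bigr => j _ do rewrite mulr_suml.
rewrite exchange_big /=; apply: eq_bigr => k _.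
rewrite (bigD1 (sel k)) //= eqxx mul1r big1 ?addr0 // => j /negbTE.
by rewrite eq_sym => ->; rewrite !mul0r.
Qed.

Lemma Bm_unit : aff_indep R a I -> Bm \in unitmx.
Proof.
move=> aff; rewrite unitmxE unitfE; apply/negP => /eqP d0.
have /det0P [v nz vB] : \det Bm^T == 0 by rewrite det_tr d0.
pose lam j := \sum_k (sel k == j)%:R * v 0 k.
have vBE r : \sum_k v 0 k * Amx R a r (sel k) = 0.
  transitivity ((v *m Bm^T) 0 r); last by rewrite vB mxE.
  by rewrite mxE; apply: eq_bigr => k _; rewrite !mxE.
have H := aff lam.
have : forall j, lam j = 0.
  apply: H.
  - move=> j jI; apply: big1 => k _.
    have -> : (sel k == j) = false.
      by apply/eqP => e; move: jI; rewrite -e sel_in.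
    by rewrite mul0r.
  - transitivity (\sum_k v 0 k * Amx R a (lshift d 0) (sel k)); last exact: vBE.
    rewrite -(sel_sum v (fun j => Amx R a (lshift d 0) j)).
    by apply: eq_bigr => j _; rewrite AmxEu mulr1.
  - apply/rowP => r; rewrite summxE mxE.
    under eq_bigr => j _ do rewrite mxE.
    transitivity (\sum_k v 0 k * Amx R a (rshift 1 r) (sel k)); last exact: vBE.
    rewrite -(sel_sum v (fun j => Amx R a (rshift 1 r) j)).
    by apply: eq_bigr => j _; rewrite AmxEd.
move=> lam0; move/eqP: nz; apply; apply/rowP => k.
have := lam0 (sel k); rewrite /lam (bigD1 k) //= eqxx mul1r big1 ?addr0 ?mxE //.
move=> k' /negbTE nk; rewrite (inj_eq sel_inj) nk mul0r //.
Qed.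

Definition interp (h : 'rV[R]_n) (i : 'I_n) : R :=
  (hI h *m invmx Bm *m col i A) 0 0.

Lemma dIiE (h : 'rV[R]_n) (i : 'I_n) : Bm \in unitmx ->
  dIi R a I i h = dI R a I * (h 0 i - interp h i).
Proof.
move=> uB; rewrite /dIi /dI colsqAh colsqB det_schur // det_mx11.
by rewrite 3![in LHS]mxE eqxx mulr1n.
Qed.

End Simp.

Section Geo.
Variables (R : realType) (d n : nat) (a : 'I_n -> 'rV[int]_d).

Lemma liftdot (h : 'rV[R]_n) (w : 'rV[R]_(d + 1)) j :
  dotv w (liftpt R a h j) = dotv (lsubmx w) (ptR R a j) + w 0 (rshift d 0) * h 0 j.
Proof.
rewrite /liftpt -{1}(hsubmxK w) dotv_row_mx; congr (_ + _).
by rewrite /dotv big_ord1 !mxE eqxx mulr1n.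
Qed.

Lemma in_conv_lift (h : 'rV[R]_n) j : in_conv R a h (liftpt R a h j).
Proof.
exists (fun l => (l == j)%:R); split; first by move=> l; rewrite ler0n.
split.
  by rewrite (bigD1 j) //= eqxx big1 ?addr0 // => l /negbTE ->.
by rewrite (bigD1 j) //= eqxx scale1r big1 ?addr0 // => l /negbTE ->; rewrite scale0r.
Qed.

Lemma conv_bound (h : 'rV[R]_n) (w : 'rV[R]_(d + 1)) c y :
  (forall j, c <= dotv w (liftpt R a h j)) -> in_conv R a h y -> c <= dotv w y.
Proof.
move=> H [lam [l0 [l1 ->]]]; rewrite dotv_sum.
have -> : c = \sum_j lam j * c by rewrite -mulr_suml l1 mul1r.
by apply: ler_sum => j _; apply: ler_wpM2l.
Qed.

Lemma rhoA (rho : 'rV[R]_(1 + d)) j :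
  (rho *m Amx R a) 0 j = rho 0 (lshift d 0) + dotv (rsubmx rho) (ptR R a j).
Proof.
rewrite mxE big_split_ord /= big_ord1 AmxEu mulr1; congr (_ + _).
by apply: eq_bigr => r _; rewrite AmxEd [rsubmx _ _ _]mxE.
Qed.

Variables (I : {set 'I_n}) (j0 : 'I_n).
Hypothesis cardI : #|I| = d.+1.

Lemma interp_rho (h : 'rV[R]_n) (rho : 'rV[R]_(1 + d)) i :
  Bm R a I j0 \in unitmx ->
  (forall j, j \in I -> (rho *m Amx R a) 0 j = h 0 j) ->
  interp a I j0 h i = (rho *m Amx R a) 0 i.
Proof.
move=> uB H; rewrite /interp.
have -> : hI d I j0 h = rho *m Bm R a I j0.
  apply/rowP => k; rewrite !mxE -H ?sel_in // mxE.
  by apply: eq_bigr => r _; rewrite !mxE.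
rewrite mulmxK // !mxE; apply: eq_bigr => r _; by rewrite !mxE.
Qed.

Lemma rho_interp (h : 'rV[R]_n) i :
  Bm R a I j0 \in unitmx ->
  let rho := hI d I j0 h *m invmx (Bm R a I j0) in
  (forall j, j \in I -> (rho *m Amx R a) 0 j = h 0 j) /\
  interp a I j0 h i = (rho *m Amx R a) 0 i.
Proof.
move=> uB rho.
have H : forall j, j \in I -> (rho *m Amx R a) 0 j = h 0 j.
  move=> j /(sel_onto j0 cardI) [k <-].
  have := congr1 (fun M : 'rV[R]_(1 + d) => M 0 k) (mulmxKV uB (hI d I j0 h)).
  rewrite [in RHS]mxE => <-; rewrite !mxE; apply: eq_bigr => r _; rewrite !mxE //.
by split => //; apply: interp_rho.
Qed.

End Geo.

Section Cell.
Variables (R : realType) (d n : nat) (a : 'I_n -> 'rV[int]_d).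
Variables (I : {set 'I_n}) (j0 : 'I_n).
Hypothesis cardI : #|I| = d.+1.

Lemma dotvN (k : nat) (u v : 'rV[R]_k) : dotv (- u) v = - dotv u v.
Proof. by rewrite -scaleN1r dotvZ mulN1r. Qed.

Lemma cell_iff (h : 'rV[R]_n) : Bm R a I j0 \in unitmx ->
  (is_cell R a h I <-> forall i, i \notin I -> interp a I j0 h i < h 0 i).
Proof.
move=> uB.
pose j1 := sel I j0 (ord0 : 'I_(1 + d)).
have j1I : j1 \in I by apply: sel_in.
split.
- case=> w [ws Hw] i iI.
  set s := w 0 (rshift d 0) in ws; set u := lsubmx w.
  pose g j := dotv w (liftpt R a h j).
  have gE j : g j = dotv u (ptR R a j) + s * h 0 j by rewrite /g liftdot.
  have Hon := (Hw j1).1 j1I.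
  have ge j : g j1 <= g j := Hon.2 _ (in_conv_lift a h j).
  have eqI j : j \in I -> g j = g j1.
    move=> jI; apply/eqP; rewrite eq_le ge andbT.
    exact: ((Hw j).1 jI).2 _ (in_conv_lift a h j1).
  have gtN : g j1 < g i.
    rewrite ltNge; apply/negP => le; move/negP: iI; apply; apply/(Hw i); split.
      exact: in_conv_lift.
    by move=> y Hy; apply: le_trans le (Hon.2 y Hy).
  have s0 : s != 0 by rewrite gt_eqF.
  pose rho : 'rV[R]_(1 + d) := row_mx ((g j1 / s)%:M) (- (s^-1) *: u).
  have rhoE j : (rho *m Amx R a) 0 j = (g j1 - dotv u (ptR R a j)) / s.
    rewrite rhoA row_mxKr row_mxEl mxE eqxx mulr1n dotvZ.
    by rewrite mulrBl mulNr [s^-1 * _]mulrC.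
  have -> : interp a I j0 h i = (rho *m Amx R a) 0 i.
    apply: (interp_rho cardI) => // j jI.
    rewrite rhoE -(eqI j jI) gE (addrC (dotv _ _)) addrK mulrC mulKf //.
  rewrite rhoE ltr_pdivrMr //.
  move: gtN; rewrite [g i]gE => gtN; nra.
- move=> Hlt.
  pose rho := hI d I j0 h *m invmx (Bm R a I j0).
  have HI : forall j, j \in I -> (rho *m Amx R a) 0 j = h 0 j.
    exact: (rho_interp cardI h j0 uB).1.
  have HN : forall i, i \notin I -> (rho *m Amx R a) 0 i < h 0 i.
    by move=> i iI; rewrite -(rho_interp cardI h i uB).2; apply: Hlt.
  pose c0 := rho 0 (lshift d 0).
  pose w : 'rV[R]_(d + 1) := row_mx (- rsubmx rho) (const_mx 1).
  have gE j : dotv w (liftpt R a h j) = c0 + (h 0 j - (rho *m Amx R a) 0 j).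
    rewrite liftdot row_mxKl rhoA row_mxEr mxE mul1r dotvN /c0; ring.
  exists w; split; first by rewrite row_mxEr mxE ltr01.
  move=> j; split.
  + move=> jI; split; first exact: in_conv_lift.
    move=> y; apply: conv_bound => l.
    rewrite !gE (HI j jI) subrr addr0.
    case: (boolP (l \in I)) => lI; first by rewrite HI // subrr addr0.
    have := HN l lI; lra.
  + case=> _ Hmin; apply: contraT => jN.
    have := Hmin _ (in_conv_lift a h j1); rewrite !gE (HI j1 j1I) subrr addr0.
    have := HN j jN; lra.
Qed.

End Cell.

Section Lin.
Variable R : realType.

Lemma dotvB (k : nat) (u v x : 'rV[R]_k) : dotv (u - v) x = dotv u x - dotv v x.
Proof. by rewrite /dotv -sumrB; apply: eq_bigr => i _; rewrite !mxE mulrBl. Qed.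

Lemma dotv_suml (k : nat) (T : finType) (P : pred T) (F : T -> 'rV[R]_k) x :
  dotv (\sum_(t | P t) F t) x = \sum_(t | P t) dotv (F t) x.
Proof.
rewrite /dotv exchange_big /=; apply: eq_bigr => i _.
by rewrite summxE mulr_suml.
Qed.

Lemma mul_tr_entry (q k : nat) (M : 'M[R]_(q, k)) (v : 'rV[R]_k) r :
  (M *m v^T) r 0 = dotv v (row r M).
Proof. by rewrite mxE /dotv; apply: eq_bigr => j _; rewrite !mxE mulrC. Qed.

Lemma kerE (q k : nat) (M : 'M[R]_(q, k)) (v : 'rV[R]_k) :
  M *m v^T = 0 <-> forall r, dotv v (row r M) = 0.
Proof.
split => [H r | H].
  by rewrite -mul_tr_entry H mxE.
by apply/matrixP => r c; rewrite (ord1 c) mul_tr_entry H mxE.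
Qed.

Lemma dotv_delta (k : nat) (u : 'rV[R]_k) j : dotv u (delta_mx 0 j) = u 0 j.
Proof.
rewrite /dotv (bigD1 j) //= mxE !eqxx mulr1 big1 ?addr0 // => j' /negbTE nj.
by rewrite mxE nj andbF mulr0.
Qed.

Lemma row_entry (q k : nat) (M : 'M[R]_(q, k)) r j : (row r M) 0 j = M r j.
Proof. by rewrite mxE. Qed.

Lemma sq_pos_iff (c x : R) : c != 0 -> (0 < c * (c * x)) = (0 < x).
Proof.
move=> c0; rewrite mulrA pmulr_rgt0 //.
by rewrite -expr2 exprn_even_gt0 //= c0.
Qed.

End Lin.

Section One.
Variables (R : realType) (d n : nat) (a : 'I_n -> 'rV[int]_d).
Variables (I : {set 'I_n}) (j0 : 'I_n) (m : 'I_n -> 'rV[R]_n).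
Hypothesis cardI : #|I| = d.+1.
Hypothesis aff : aff_indep R a I.
Hypothesis hm : forall i, i \notin I -> forall h, dIi R a I i h = dotv (m i) h.

Let uB : Bm R a I j0 \in unitmx := Bm_unit j0 cardI aff.

Lemma dI_neq0 : dI R a I != 0.
Proof. by rewrite /dI (colsqB R a j0 cardI) -unitfE -unitmxE. Qed.

Lemma ineq_iff h : is_cell R a h I <->
  forall i, i \notin I -> 0 < dotv (dI R a I *: m i) h.
Proof.
rewrite (cell_iff cardI h uB); split => H i iI.
  rewrite dotvZ -hm // (dIiE cardI h i uB) sq_pos_iff ?dI_neq0 // subr_gt0.
  exact: H.
have := H i iI.
by rewrite dotvZ -hm // (dIiE cardI h i uB) sq_pos_iff ?dI_neq0 // subr_gt0.
Qed.

Lemma m_entry i j : i \notin I -> j \notin I -> m i 0 j = dI R a I * (i == j)%:R.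
Proof.
move=> iI jI; rewrite -dotv_delta -hm // (dIiE cardI _ i uB) /interp.
have -> : hI d I j0 (delta_mx 0 j : 'rV[R]_n) = 0.
  apply/rowP => k; rewrite !mxE eqxx /=.
  have -> : (sel I j0 k == j) = false.
    by apply/eqP => e; move: jI; rewrite -e sel_in.
  by [].
by rewrite !mul0mx !mxE eqxx /= subr0 (eq_sym i).
Qed.

Lemma m_ker i r : i \notin I -> dotv (m i) (row r (Amx R a)) = 0.
Proof.
move=> iI; rewrite -hm // (dIiE cardI _ i uB).
rewrite (interp_rho (rho := delta_mx 0 r) cardI i uB); last first.
  by move=> j _; rewrite -rowE.
by rewrite -rowE subrr mulr0.
Qed.

Lemma span_ker v : Amx R a *m v^T = 0 ->
  v = \sum_(i | i \notin I) (v 0 i / (dI R a I * dI R a I)) *: (dI R a I *: m i).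
Proof.
move/kerE => Hv.
set S := \sum_(i | _) _.
have dI0 := dI_neq0.
have HS r : dotv (v - S) (row r (Amx R a)) = 0.
  rewrite dotvB dotv_suml Hv big1 ?subr0 // => i iI.
  by rewrite !dotvZ m_ker // !mulr0.
pose lam j := (v - S) 0 j.
have L : forall j, lam j = 0.
  apply: aff.
  - move=> j jI; rewrite /lam !mxE summxE (bigD1 j) //= big1.
      rewrite !mxE m_entry // eqxx mulr1 addr0; field.
      exact: dI0.
    move=> i /andP [iI ij]; rewrite !mxE m_entry // (negbTE ij) !mulr0 //.
  - transitivity (dotv (v - S) (row (lshift d 0) (Amx R a))); last exact: HS.
    by rewrite /dotv; apply: eq_bigr => j _; rewrite row_entry AmxEu mulr1.
  - apply/rowP => r; rewrite summxE mxE.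
    transitivity (dotv (v - S) (row (rshift 1 r) (Amx R a))); last exact: HS.
    by rewrite /dotv; apply: eq_bigr => j _; rewrite row_entry AmxEd mxE.
apply/subr0_eq/rowP => j; rewrite [RHS]mxE; exact: L.
Qed.

End One.

Unset Implicit Arguments.
Theorem lemma2p2 (R : realType) (d n p : nat)
  (a : 'I_n -> 'rV[int]_d) (I : 'I_p -> {set 'I_n})
  (m : 'I_p -> 'I_n -> 'rV[R]_n) :
  injective a ->
  (d + 2 <= n)%N ->
  full_dim R a ->
  (1 <= p)%N ->
  (forall k, is_dsimplex R a (I k)) ->
  (exists h : 'rV[R]_n, forall k, is_cell R a h (I k)) ->
  (* m k i = m^{I_k}_i : the vector with d_{I_k u {i}}(h) = <m, h> for all h *)
  (forall k i, i \notin I k -> forall h, dIi R a (I k) i h = dotv (m k i) h) ->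
  (* the cone is nonempty *)
  (exists h : 'rV[R]_n, forall k, is_cell R a h (I k)) /\
  (* the cone is defined by the strict linear inequalities *)
  (forall h : 'rV[R]_n, (forall k, is_cell R a h (I k)) <->
     (forall k i, i \notin I k -> 0 < dotv (dI R a (I k) *: m k i) h)) /\
  (* the vectors d_{I_k} m^{I_k}_i span ker A *)
  (forall v : 'rV[R]_n, Amx R a *m v^T = 0 <->
     exists c : 'I_p -> 'I_n -> R,
       v = \sum_k \sum_(i | i \notin I k) c k i *: (dI R a (I k) *: m k i)).
Proof.
move=> _ hn _ p1 simp hex hm.
have n0 : (0 < n)%N by apply: leq_trans hn; rewrite addn2.
pose j0 : 'I_n := Ordinal n0.
have II k := ineq_iff j0 (simp k).1 (simp k).2 (hm k).
split; first exact: hex.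
split.
  move=> h; split.
    by move=> H k i iI; apply: ((II k h).1 (H k)).
  by move=> H k; apply/(II k h).2 => i iI; apply: H.
move=> v; split.
  move=> Hv; pose k0 : 'I_p := Ordinal p1.
  exists (fun k i => if k == k0 then v 0 i / (dI R a (I k) * dI R a (I k)) else 0).
  rewrite (bigD1 k0) //= [X in _ + X]big1 ?addr0.
    exact: (span_ker j0 (simp k0).1 (simp k0).2 (hm k0) Hv).
  by move=> k kk0; apply: big1 => i _; rewrite (negbTE kk0) scale0r.
case=> c ->; apply/kerE => r.
rewrite dotv_suml big1 // => k _; rewrite dotv_suml big1 // => i iI.
by rewrite !dotvZ (m_ker j0 (simp k).1 (simp k).2 (hm k)) // !mulr0.
Qed.
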